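(* Let $\mathfrak{v}=(V_i,v_i,v^i)_{i\in\mathbb Z}$ be a special chain over $\mathcal Z$ and let $i,j\in\mathbb Z$ with $i<j$. If $\mathfrak{v}$ is a linked chain, then $\ker(v^i_j)=\ker(v^i)$ and $\ker(v^j_i)=\ker(v_j)$. If $\mathfrak{v}$ is a colinked chain, then $\mathrm{Im}(v^i_j)=\mathrm{Im}(v^{j-1})$ and $\mathrm{Im}(v^j_i)=\mathrm{Im}(v_i)$.
   Context: Let $k$ be a field. $\mathcal Z$ is the quiver with vertex set $\mathbb Z$ and, for each $i\in\mathbb Z$, an arrow $\alpha^i\colon i\to i+1$ and an arrow $\alpha_i\colon i+1\to i$. A representation $\mathfrak{v}=(V_i,v_i,v^i)_{i\in\mathbb Z}$ of $\mathcal Z$ consists of finite-dimensional $k$-vector spaces $V_i$ and linear maps $v^i\colon V_i\to V_{i+1}$, $v_i\colon V_{i+1}\to V_i$. For $i,j\in\mathbb Z$ set $v^i_i=\mathrm{Id}_{V_i}$, $v^i_j=v^{j-1}\circ\cdots\circ v^i\colon V_i\to V_j$ if $j>i$, and $v^i_j=v_j\circ v_{j+1}\circ\cdots\circ v_{i-1}\colon V_i\to V_j$ if $j<i$. A special chain is a representation with $v_i\circ v^i=0$ and $v^i\circ v_i=0$ for all $i$. A linked chain is a special chain with $\ker(v_{i-1})\cap\ker(v^i)=0$ for all $i$. A colinked chain is a special chain with $\mathrm{Im}(v_i)+\mathrm{Im}(v^{i-1})=V_i$ for all $i$. *)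

(* Defs.v *)
From HB Require Import structures.
From mathcomp Require Import all_boot all_order all_algebra.
Set Implicit Arguments. Unset Strict Implicit. Unset Printing Implicit Defensive.
Import GRing.Theory.
Local Open Scope ring_scope.

(* A representation of the quiver Z over a field K:
   V i finite-dimensional (vectType), vup i = v^i : V_i -> V_{i+1},
   vdn i = v_i : V_{i+1} -> V_i. *)
Section ZRep.
Variables (K : fieldType) (V : int -> vectType K).
Variables (vup : forall i : int, 'Hom(V i, V (i + 1)))
          (vdn : forall i : int, 'Hom(V (i + 1), V i)).

(* identity transport V i -> V j along i = j (zero if i <> j; only used
   with i = j) *)
Definition castV (i j : int) : 'Hom(V i, V j) :=
  match i =P j with
  | ReflectT e => eq_rect i (fun k => 'Hom(V i, V k)) \1%VF j e
  | ReflectF _ => 0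
  end.

(* upn n i j = v^{j-1} o ... o v^i (n factors, meaningful when j = i + n) *)
Fixpoint upn (n : nat) (i j : int) : 'Hom(V i, V j) :=
  match n with
  | 0%N => castV i j
  | m.+1 => (upn m (i + 1) j \o vup i)%VF
  end.

(* dnn n i j = v_j o v_{j+1} o ... o v_{i-1} (n factors, when i = j + n) *)
Fixpoint dnn (n : nat) (i j : int) : 'Hom(V i, V j) :=
  match n with
  | 0%N => castV i j
  | m.+1 => (vdn j \o dnn m i (j + 1))%VF
  end.

Definition vcomp (i j : int) : 'Hom(V i, V j) :=
  if i <= j then upn `|j - i|%N i j else dnn `|i - j|%N i j.

Definition special_chain : Prop :=
  (forall i, (vdn i \o vup i)%VF = 0) /\ (forall i, (vup i \o vdn i)%VF = 0).

(* ker(v_{i-1}) /\ ker(v^i) = 0 for all i, reindexed i := i+1 *)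
Definition linked_chain : Prop :=
  special_chain /\ forall i, (lker (vdn i) :&: lker (vup (i + 1)))%VS = 0%VS.

(* Im(v_i) + Im(v^{i-1}) = V_i for all i, reindexed i := i+1 *)
Definition colinked_chain : Prop :=
  special_chain /\ forall i, (limg (vdn (i + 1)) + limg (vup i))%VS = fullv.

End ZRep.

(* Main.v *)
Require Import Defs.
From HB Require Import structures.
From mathcomp Require Import all_boot all_order all_algebra.
From mathcomp Require Import zify.
Import GRing.Theory.
Local Open Scope ring_scope.

Section Aux.
Variables (K : fieldType) (V : int -> vectType K).
Variables (vup : forall i : int, 'Hom(V i, V (i + 1)))
          (vdn : forall i : int, 'Hom(V (i + 1), V i)).

Lemma castV_id i : castV V i i = \1%VF.
Proof.
rewrite /castV; case: (i =P i) => [e|//].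
by rewrite (eq_irrelevance e (erefl i)).
Qed.

Hypothesis Hs : special_chain vup vdn.

Lemma up_ker (Hl : forall i, (lker (vdn i) :&: lker (vup (i + 1)))%VS = 0%VS) :
  forall n i j (x : V i), i + (n.+1)%:Z = j ->
  (upn vup n.+1 i j x == 0) = (vup i x == 0).
Proof.
elim=> [|n IH] i j x e.
  have e1 : i + 1 = j by move: e; rewrite addrC.
  subst j => /=; by rewrite comp_lfunE castV_id id_lfunE.
rewrite /= comp_lfunE.
have e1 : (i + 1) + (n.+1)%:Z = j by rewrite -e; lia.
move: (IH (i+1) j (vup i x) e1) => /= ->.
apply/eqP/eqP => [h|->]; last by rewrite linear0.
have : vup i x \in (lker (vdn i) :&: lker (vup (i + 1)))%VS.
  rewrite memv_cap !memv_ker h eqxx andbT.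
  by case: Hs => H1 _; rewrite -comp_lfunE H1 lfunE.
by rewrite Hl memv0 => /eqP.
Qed.

Lemma dn_ker (Hl : forall i, (lker (vdn i) :&: lker (vup (i + 1)))%VS = 0%VS) :
  forall n i j (x : V j), i + (n.+1)%:Z = j ->
  (dnn vdn n.+1 j i x == 0) = (dnn vdn 1 j (j - 1) x == 0).
Proof.
elim=> [|n IH] i j x e.
  have e1 : i = j - 1 by rewrite -e; lia.
  by subst i.
rewrite -(IH (i+1) j x); last by rewrite -e; lia.
rewrite [dnn vdn n.+2 j i]/= comp_lfunE.
apply/eqP/eqP => [h|->]; last by rewrite linear0.
have : dnn vdn n.+1 j (i + 1) x \in (lker (vdn i) :&: lker (vup (i + 1)))%VS.
  rewrite memv_cap !memv_ker h eqxx /= comp_lfunE.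
  by case: Hs => _ H2; rewrite -comp_lfunE H2 lfunE.
by rewrite Hl memv0 => /eqP.
Qed.

Lemma up_img (Hc : forall i, (limg (vdn (i + 1)) + limg (vup i))%VS = fullv) :
  forall n i j, i + (n.+1)%:Z = j ->
  limg (upn vup n.+1 i j) = limg (upn vup 1 (j - 1) j).
Proof.
elim=> [|n IH] i j e.
  have e1 : i = j - 1 by rewrite -e; lia.
  by subst i.
rewrite -(IH (i+1) j); last by rewrite -e; lia.
apply/vspaceP => y; apply/memv_imgP/memv_imgP => -[x _ ->].
  by exists (vup i x); rewrite ?memvf //= comp_lfunE.
have := memvf x; rewrite -Hc => /memv_addP [a /memv_imgP [a' _ ->]].
move=> [b /memv_imgP [b' _ ->] ->].
exists b'; rewrite ?memvf //= !comp_lfunE linearD /=.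
case: Hs => _ H2; by rewrite -[vup (i+1) (vdn (i+1) a')]comp_lfunE H2 lfunE add0r.
Qed.

Lemma dn_img (Hc : forall i, (limg (vdn (i + 1)) + limg (vup i))%VS = fullv) :
  forall n i j, i + (n.+1)%:Z = j ->
  limg (dnn vdn n.+1 j i) = limg (vdn i).
Proof.
elim=> [|n IH] i j e.
  have e1 : j = i + 1 by rewrite -e.
  subst j; apply/vspaceP => y; apply/memv_imgP/memv_imgP => -[x _ ->].
    by exists (castV V (i + 1) (i + 1) x); rewrite ?memvf //= comp_lfunE.
  by exists x; rewrite ?memvf //= comp_lfunE castV_id id_lfunE.
apply/vspaceP => y; apply/memv_imgP/memv_imgP => -[x _ ->].
  by exists (dnn vdn n.+1 j (i + 1) x); rewrite ?memvf //= comp_lfunE.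
have := memvf x; rewrite -Hc => /memv_addP [a /memv_imgP [a' _ ->]].
move=> [b /memv_imgP [b' _ ->] ->].
have : vdn (i + 1) a' \in limg (dnn vdn n.+1 j (i + 1)).
  by rewrite (IH (i+1) j) ?memv_img ?memvf //; rewrite -e; lia.
move=> /memv_imgP [c _ ec].
exists c; rewrite ?memvf //.
rewrite [dnn vdn n.+2 j i]/= comp_lfunE -ec linearD /=.
case: Hs => H1 _; by rewrite -[vdn i (vup i b')]comp_lfunE H1 lfunE addr0.
Qed.

End Aux.

Theorem proposition2p4 (K : fieldType) (V : int -> vectType K)
  (vup : forall i : int, 'Hom(V i, V (i + 1)))
  (vdn : forall i : int, 'Hom(V (i + 1), V i))
  (Hspecial : special_chain vup vdn) (i j : int) (hij : i < j) :
  (linked_chain vup vdn ->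
     lker (vcomp vup vdn i j) = lker (vup i) /\
     lker (vcomp vup vdn j i) = lker (vcomp vup vdn j (j - 1))) /\
  (colinked_chain vup vdn ->
     limg (vcomp vup vdn i j) = limg (vcomp vup vdn (j - 1) j) /\
     limg (vcomp vup vdn j i) = limg (vdn i)).
Proof.
have [n [en e]] : exists n : nat, `|j - i|%N = n.+1 /\ i + (n.+1)%:Z = j.
  exists (`|j - i|%N).-1; split; lia.
have e1 : `|(j - (j - 1))%R|%N = 1%N by lia.
rewrite /vcomp (_ : (i <= j) = true); last by lia.
rewrite (_ : (j <= i) = false); last by lia.
rewrite (_ : (j - 1 <= j) = true); last by lia.
rewrite (_ : (j <= j - 1) = false); last by lia.
rewrite en e1; split => -[_ H].
  split; apply/vspaceP => x; rewrite !memv_ker.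
    by rewrite (@up_ker K V vup vdn Hspecial H n i j x e).
  by rewrite (@dn_ker K V vup vdn Hspecial H n i j x e).
split; [by rewrite (@up_img K V vup vdn Hspecial H n i j e) | by rewrite (@dn_img K V vup vdn Hspecial H n i j e)].
Qed.
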